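(* Assume that $f$ obeys $RC(\alpha,\beta,\epsilon)$ for all $\mathbf{z} \in E(\epsilon)$. Furthermore, suppose $\mathbf{z}_0 \in E(\epsilon)$, and assume $0<\mu\le {2}/{\beta}$. Consider the following update \[ \mathbf{z}_{\tau+1}=\mathbf{z}_\tau-\mu\nabla f(\mathbf{z}_\tau). \] Then for all $\tau$ we have $\mathbf{z}_\tau\in E(\epsilon)$ and \begin{align*} \text{dist}^2(\mathbf{z}_\tau,\mathbf{x})\le \left(1-\frac{2\mu}{\alpha}\right)^\tau \text{dist}^2(\mathbf{z}_0,\mathbf{x}). \end{align*}
   Context: $f:\mathbb{C}^n\to\mathbb{R}$ (in the paper, $f(\mathbf{z})=\frac{1}{2m}\sum_r(y_r-|\mathbf{a}_r^*\mathbf{z}|^2)^2$) with Wirtinger gradient $\nabla f(\mathbf{z})=(\partial f/\partial\mathbf{z})^*$. $\mathbf{x}\in\mathbb{C}^n$ is a planted solution, $P=\{\mathbf{x}e^{i\phi}:\phi\in[0,2\pi]\}$, $E(\epsilon)=\{\mathbf{z}\in\mathbb{C}^n:\text{dist}(\mathbf{z},P)\le\epsilon\}$, $\phi(\mathbf{z})=\arg\min_{\phi\in[0,2\pi]}\|\mathbf{z}-e^{i\phi}\mathbf{x}\|_2$ and $\text{dist}(\mathbf{z},\mathbf{x})=\|\mathbf{z}-e^{i\phi(\mathbf{z})}\mathbf{x}\|_2$. Regularity condition $RC(\alpha,\beta,\epsilon)$: for all $\mathbf{z}\in E(\epsilon)$, $\operatorname{Re}\left(\langle \nabla f(\mathbf{z}),\mathbf{z}-\mathbf{x}e^{i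 \phi(\mathbf{z})}\rangle\right) \ge \frac{1}{\alpha}\text{dist}^2(\mathbf{z},\mathbf{x})+\frac{1}{\beta}\|\nabla f(\mathbf{z})\|_2^2$. *)

(* Defs.v *)
From mathcomp Require Import all_boot all_order all_algebra.
From mathcomp Require Import all_classical all_reals all_analysis.
From mathcomp Require Export complex.
Import Order.TTheory GRing.Theory Num.Theory ComplexField.

Set Implicit Arguments.
Unset Strict Implicit.
Unset Printing Implicit Defensive.

Local Open Scope ring_scope.
Local Open Scope complex_scope.
Local Open Scope classical_set_scope.

Section PhaseRetrieval.
Variables (R : realType) (n : nat).

Definition cinner (u v : 'cV[R[i]]_n) : R[i] :=
  \sum_(i < n) ((u i ord0)^*)%C * v i ord0.

Definition cnorm (v : 'cV[R[i]]_n) : R :=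
  Num.sqrt (\sum_(i < n)
    (complex.Re (v i ord0) ^+ 2 + complex.Im (v i ord0) ^+ 2)).

Definition expi (phi : R) : R[i] := (cos phi +i* sin phi)%C.

Definition phase_orbit (x : 'cV[R[i]]_n) : set 'cV[R[i]]_n :=
  [set expi phi *: x | phi in `[0, 2 * pi]%classic].

Definition dist_to_orbit (z x : 'cV[R[i]]_n) : R :=
  inf [set cnorm (z - p) | p in phase_orbit x].

Definition cdist (z x : 'cV[R[i]]_n) : R :=
  inf [set cnorm (z - expi phi *: x) | phi in `[0, 2 * pi]%classic].

Definition Eball (x : 'cV[R[i]]_n) (eps : R) : set 'cV[R[i]]_n :=
  [set z | dist_to_orbit z x <= eps].

Definition is_phase_argmin (z x : 'cV[R[i]]_n) (phi : R) : Prop :=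
  (0 <= phi <= 2 * pi) /\
  forall psi, 0 <= psi <= 2 * pi ->
    cnorm (z - expi phi *: x) <= cnorm (z - expi psi *: x).

Definition RC (x : 'cV[R[i]]_n) (grad : 'cV[R[i]]_n -> 'cV[R[i]]_n)
    (alpha beta eps : R) : Prop :=
  forall z, Eball x eps z ->
    exists phi, is_phase_argmin z x phi /\
      complex.Re (cinner (grad z) (z - expi phi *: x))
        >= (cdist z x) ^+ 2 / alpha + (cnorm (grad z)) ^+ 2 / beta.

End PhaseRetrieval.

(* Main.v *)
Require Import Defs.
From mathcomp Require Import all_boot all_order all_algebra.
From mathcomp Require Import all_classical all_reals all_analysis.
From mathcomp Require Import complex.
From mathcomp Require Import ring lra.
Import Order.TTheory GRing.Theory Num.Theory ComplexField.
Local Open Scope ring_scope.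
Local Open Scope complex_scope.

Section H.
Variables (R : realType) (n : nat).
Implicit Types (z x h g : 'cV[R[i]]_n).

Lemma cnorm_ge0 h : 0 <= cnorm h.
Proof. exact: sqrtr_ge0. Qed.

Lemma cnorm_sq h : cnorm h ^+ 2 =
  \sum_(i < n) (complex.Re (h i ord0) ^+ 2 + complex.Im (h i ord0) ^+ 2).
Proof.
rewrite /cnorm sqr_sqrtr //; apply: sumr_ge0 => i _.
by apply: addr_ge0; apply: sqr_ge0.
Qed.

Lemma cdist_le z x phi : 0 <= phi <= 2 * pi -> cdist z x <= cnorm (z - expi phi *: x).
Proof.
move=> hp; apply: ge_inf; last by exists phi => //; rewrite /= in_itv /=.
by exists 0 => y [psi _ <-]; apply: cnorm_ge0.
Qed.

Lemma cdist_ge0 z x : 0 <= cdist z x.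
Proof.
apply: lb_le_inf; first by exists (cnorm (z - expi 0 *: x)); exists 0 => //=;
  rewrite in_itv /= lexx /= mulr_ge0 // pi_ge0.
by move=> y [psi _ <-]; apply: cnorm_ge0.
Qed.

Lemma cdist_argmin z x phi : is_phase_argmin z x phi ->
  cdist z x = cnorm (z - expi phi *: x).
Proof.
move=> [hp hmin]; apply/eqP; rewrite eq_le cdist_le //=.
apply: lb_le_inf; first by exists (cnorm (z - expi phi *: x)); exists phi => //;
  rewrite /= in_itv /=.
move=> y [psi]; rewrite /= in_itv /= => hpsi <-; exact: hmin.
Qed.

Lemma dist_orbitE z x : dist_to_orbit z x = cdist z x.
Proof. by rewrite /dist_to_orbit /phase_orbit image_comp. Qed.

Lemma expand h g (mu : R) :
  cnorm (h - mu%:C *: g) ^+ 2 = cnorm h ^+ 2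
     - 2 * mu * complex.Re (cinner g h) + mu ^+ 2 * cnorm g ^+ 2.
Proof.
rewrite !cnorm_sq /cinner.
rewrite (@raddf_sum _ _ (@complex.Re R)) mulr_sumr mulr_sumr -sumrB -big_split /=.
apply: eq_bigr => i _; rewrite !mxE.
case: (h i ord0) => a b; case: (g i ord0) => c d /=.
ring.
Qed.
Lemma step x grad (alpha beta eps mu : R) z :
  0 < alpha -> RC x grad alpha beta eps -> 0 < mu -> mu <= 2 / beta ->
  Eball x eps z ->
  Eball x eps (z - mu%:C *: grad z) /\
  cdist (z - mu%:C *: grad z) x ^+ 2 <= (1 - 2 * mu / alpha) * cdist z x ^+ 2.
Proof.
move=> ha hRC hmu hmub hz.
have [phi [hphi hre]] := hRC z hz.
have hd := cdist_argmin _ _ _ hphi.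
set d := cdist z x in hd hre *.
set h := z - expi phi *: x in hd hre.
set g := grad z in hre *.
have hle : cdist (z - mu%:C *: g) x <= cnorm (h - mu%:C *: g).
  have -> : h - mu%:C *: g = z - mu%:C *: g - expi phi *: x.
    by rewrite /h addrAC.
  by apply: cdist_le; case: hphi.
have hle2 : cdist (z - mu%:C *: g) x ^+ 2 <= cnorm (h - mu%:C *: g) ^+ 2.
  by rewrite lerXn2r // ?nnegrE ?cdist_ge0 ?cnorm_ge0.
have hG : mu * (cnorm g ^+ 2) * mu <= mu * (cnorm g ^+ 2) * (2 / beta).
  by apply: ler_wpM2l => //; apply: mulr_ge0; [exact: ltW | exact: sqr_ge0].
have hd0 : 0 <= d ^+ 2 / alpha by apply: divr_ge0; [exact: sqr_ge0|exact: ltW].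
have key : cdist (z - mu%:C *: g) x ^+ 2 <= (1 - 2 * mu / alpha) * d ^+ 2.
  apply: (le_trans hle2); rewrite expand -hd.
  have -> : (1 - 2 * mu / alpha) * d ^+ 2 = d ^+ 2 - 2 * mu * (d ^+ 2 / alpha).
    by ring.
  have e2 : mu * cnorm g ^+ 2 * (2 / beta) = 2 * mu * (cnorm g ^+ 2 / beta).
    by ring.
  rewrite e2 in hG; move: hre; set re := complex.Re _ => hre.
  have : 2 * mu * (d ^+ 2 / alpha + cnorm g ^+ 2 / beta) <= 2 * mu * re.
    by apply: ler_wpM2l => //; apply: mulr_ge0 => //; exact: ltW.
  nra.
split=> //.
rewrite /Eball /= dist_orbitE.
have : cdist (z - mu%:C *: g) x ^+ 2 <= d ^+ 2.
  apply: (le_trans key).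
  have : 0 <= 2 * mu * (d ^+ 2 / alpha) by apply: mulr_ge0 => //; apply: mulr_ge0 => //; exact: ltW.
  have -> : (1 - 2 * mu / alpha) * d ^+ 2 = d ^+ 2 - 2 * mu * (d ^+ 2 / alpha).
    by ring.
  lra.
rewrite ler_pXn2r ?nnegrE ?cdist_ge0 // => hl.
apply: (le_trans hl); move: hz; by rewrite /Eball /= dist_orbitE.
Qed.
End H.
Arguments step {R n x grad alpha beta eps mu z}.

Theorem lemma7p10 (R : realType) (n : nat) (x : 'cV[R[i]]_n)
    (grad : 'cV[R[i]]_n -> 'cV[R[i]]_n) (alpha beta eps mu : R)
    (z : nat -> 'cV[R[i]]_n) :
  0 < alpha ->
  RC x grad alpha beta eps ->
  Eball x eps (z 0%N) ->
  0 < mu -> mu <= 2 / beta ->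
  (forall t : nat, z t.+1 = z t - (mu%:C)%C *: grad (z t)) ->
  forall t : nat,
    Eball x eps (z t) /\
    (cdist (z t) x) ^+ 2 <= (1 - 2 * mu / alpha) ^+ t * (cdist (z 0%N) x) ^+ 2.
Proof.
move=> ha hRC hz0 hmu hmub hz.
have HE : forall t, Eball x eps (z t).
  elim=> [//|t IH]; rewrite hz; exact: (step ha hRC hmu hmub IH).1.
have HS : forall t, cdist (z t.+1) x ^+ 2 <= (1 - 2 * mu / alpha) * cdist (z t) x ^+ 2.
  by move=> t; rewrite hz; exact: (step ha hRC hmu hmub (HE t)).2.
move=> t; split; first exact: HE.
set c := 1 - 2 * mu / alpha in HS *.
have [hc|hc] := leP 0 c.
  elim: t => [|t IH]; first by rewrite expr0 mul1r.
  apply: (le_trans (HS t)); rewrite (exprS c) -mulrA; exact: ler_wpM2l.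
have hd0 : cdist (z 0%N) x ^+ 2 = 0.
  have := HS 0%N; have := sqr_ge0 (cdist (z 1%N) x);
  have := sqr_ge0 (cdist (z 0%N) x); nra.
rewrite hd0 mulr0.
elim: t => [|t IH]; first by rewrite hd0.
have := HS t; have := sqr_ge0 (cdist (z t) x); nra.
Qed.
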